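(* Let $p$ be a prime and $R=\mathcal{O}_{\mathbb{C}_p}$ the valuation ring of $\mathbb{C}_p$. Then $R$ does not satisfy the following condition: for any $r_0,r_1,\dots\in R$ with $r_0+I_0\supseteq r_1+I_1\supseteq r_2+I_2\supseteq\cdots$, the intersection $\bigcap_{i\ge0}(r_i+I_i)$ is nonempty.
   Context: $\mathbb{C}_p$ is the completion of an algebraic closure of $\mathbb{Q}_p$. For a commutative ring $R$, define ideals $I_0=R$ and $I_i=\{r\in R: r^p\in pI_{i-1}\}$ for $i>0$. *)

(* Defs.v *)
From HB Require Import structures.
From mathcomp Require Import all_boot all_order all_algebra.
From mathcomp Require Import reals.
Set Implicit Arguments. Unset Strict Implicit. Unset Printing Implicit Defensive.
Import Order.TTheory GRing.Theory Num.Theory.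
Local Open Scope ring_scope.

Section Defs.
Variables (Rl : realType) (K : fieldType) (abs : K -> Rl).

Definition nonarch_abs : Prop :=
  [/\ forall x, 0 <= abs x,
      forall x, abs x = 0 <-> x = 0,
      forall x y, abs (x * y) = abs x * abs y
    & forall x y, abs (x + y) <= Num.max (abs x) (abs y)].

Definition abs_cauchy (u : nat -> K) : Prop :=
  forall eps : Rl, 0 < eps -> exists N : nat,
    forall m n : nat, (N <= m)%N -> (N <= n)%N -> abs (u m - u n) < eps.

Definition abs_converges_to (u : nat -> K) (l : K) : Prop :=
  forall eps : Rl, 0 < eps -> exists N : nat,
    forall n : nat, (N <= n)%N -> abs (u n - l) < eps.

Definition abs_complete : Prop :=
  forall u : nat -> K, abs_cauchy u -> exists l, abs_converges_to u l.

(* closure of Q in K: a copy of Q_p *)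
Definition Qp_part (x : K) : Prop :=
  exists q : nat -> rat, abs_converges_to (fun n => ratr (q n)) x.

Definition is_subfield (A : K -> Prop) : Prop :=
  [/\ A 0, A 1,
      forall x y, A x -> A y -> A (x - y),
      forall x y, A x -> A y -> A (x * y)
    & forall x, A x -> A x^-1].

Definition alg_closed_sub (A : K -> Prop) : Prop :=
  forall q : {poly K}, (forall i, A q`_i) -> (1 < size q)%N ->
    exists x, A x /\ root q x.

Definition algebraic_over (B A : K -> Prop) : Prop :=
  forall a, A a -> exists q : {poly K}, q != 0 /\ (forall i, B q`_i) /\ root q a.

Definition abs_dense (A : K -> Prop) : Prop :=
  forall (x : K) (eps : Rl), 0 < eps -> exists a, A a /\ abs (x - a) < eps.

Definition is_Cp (p : nat) : Prop :=
  [/\ nonarch_abs, abs p%:R = (p%:R)^-1, abs_complete &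
      exists A : K -> Prop,
        [/\ is_subfield A, (forall x, Qp_part x -> A x), alg_closed_sub A,
            algebraic_over Qp_part A & abs_dense A]].

Definition in_O (x : K) : Prop := abs x <= 1.

Fixpoint Iideal (p : nat) (i : nat) : K -> Prop :=
  match i with
  | 0 => in_O
  | i'.+1 => fun x => in_O x /\ exists y, Iideal p i' y /\ x ^+ p = p%:R * y
  end.

Definition nested_coset_condition (p : nat) : Prop :=
  forall r : nat -> K, (forall i, in_O (r i)) ->
    (forall (i : nat) (x : K), in_O x ->
        Iideal p i.+1 (x - r i.+1) -> Iideal p i (x - r i)) ->
    exists x, in_O x /\ forall i, Iideal p i (x - r i).

End Defs.

(* Main.v *)
Require Import Defs.
From HB Require Import structures.
From mathcomp Require Import all_boot all_order all_algebra.
From mathcomp Require Import reals.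
From mathcomp Require Import ring.
From Stdlib Require Import Classical ClassicalEpsilon.
Set Implicit Arguments. Unset Strict Implicit. Unset Printing Implicit Defensive.
Import Order.TTheory GRing.Theory Num.Theory.
Local Open Scope ring_scope.

Section Basic.
Variables (Rl : realType) (K : fieldType) (abs : K -> Rl).
Hypothesis Ha : nonarch_abs abs.

Lemma abs_ge0 x : 0 <= abs x. Proof. by case: Ha. Qed.
Lemma abs_eq0 x : abs x = 0 <-> x = 0. Proof. by case: Ha. Qed.
Lemma absM x y : abs (x * y) = abs x * abs y. Proof. by case: Ha. Qed.
Lemma absD x y : abs (x + y) <= Num.max (abs x) (abs y). Proof. by case: Ha. Qed.
Lemma abs0 : abs 0 = 0. Proof. by apply/abs_eq0. Qed.
Lemma abs1 : abs 1 = 1.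
Proof.
have h : abs 1 = abs 1 * abs 1 by rewrite -absM mulr1.
have n0 : abs 1 != 0 by apply/eqP => /abs_eq0 /eqP; rewrite oner_eq0.
by apply: (mulfI n0); rewrite -h mulr1.
Qed.
Lemma absN x : abs (- x) = abs x.
Proof.
have h1 : abs (-1) = 1.
  have h : abs (-1) ^+ 2 = 1 ^+ 2 by rewrite expr2 -absM mulrNN mulr1 abs1 expr1n.
  move/eqP: h; rewrite eqrXn2 //; [by move/eqP| exact: abs_ge0].
by rewrite -mulN1r absM h1 mul1r.
Qed.
Lemma absB x y : abs (x - y) = abs (y - x).
Proof. by rewrite -absN opprB. Qed.
Lemma absX x n : abs (x ^+ n) = abs x ^+ n.
Proof. elim: n => [|n IH]; first by rewrite !expr0 abs1. by rewrite !exprS absM IH. Qed.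
Lemma absV x : x != 0 -> abs x^-1 = (abs x)^-1.
Proof.
move=> x0; have : abs x * abs x^-1 = 1 by rewrite -absM mulfV // abs1.
have ax : abs x != 0 by apply/eqP => /abs_eq0 /eqP; rewrite (negbTE x0).
move=> h; apply: (mulfI ax); by rewrite h mulfV.
Qed.
Lemma absD_le x y b : abs x <= b -> abs y <= b -> abs (x + y) <= b.
Proof. move=> hx hy; apply: le_trans (absD x y) _; by rewrite ge_max hx hy. Qed.
Lemma absD_lt x y b : abs x < b -> abs y < b -> abs (x + y) < b.
Proof. move=> hx hy; apply: le_lt_trans (absD x y) _; by rewrite gt_max hx hy. Qed.
Lemma absB_le x y b : abs x <= b -> abs y <= b -> abs (x - y) <= b.
Proof. by move=> hx hy; apply: absD_le; rewrite // absN. Qed.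
Lemma abs_sum_le n (F : 'I_n -> K) b : 0 <= b -> (forall i, abs (F i) <= b) ->
  abs (\sum_(i < n) F i) <= b.
Proof.
move=> b0 h; apply: (big_ind (fun x => abs x <= b)); first by rewrite abs0.
  by move=> x y hx hy; apply: absD_le.
by move=> i _; apply: h.
Qed.
Lemma abs_close x y : abs (y - x) < abs x -> abs y = abs x.
Proof.
move=> h.
have e1 : abs y <= abs x.
  have -> : y = x + (y - x) by rewrite addrC subrK.
  apply: le_trans (absD _ _) _; rewrite ge_max lexx /=; exact: ltW.
apply/eqP; rewrite eq_le e1 /=.
have e2 : abs x <= Num.max (abs y) (abs (x - y)).
  by have := absD y (x - y); rewrite addrC subrK.
rewrite absB in e2; move: e2; rewrite le_max => /orP[//|].
by rewrite leNgt h.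
Qed.

End Basic.
Section Ideals.
Variables (Rl : realType) (K : fieldType) (abs : K -> Rl) (p : nat).
Hypothesis Ha : nonarch_abs abs.
Hypothesis Hp : prime p.
Hypothesis Hpa : abs p%:R = (p%:R)^-1.

Lemma p_gt1 : (1 < p)%N. Proof. exact: prime_gt1. Qed.
Lemma pK_neq0 : (p%:R : K) != 0.
Proof.
apply/eqP => /(abs_eq0 Ha); rewrite Hpa => /eqP; rewrite invr_eq0 pnatr_eq0.
by have := p_gt1; case: p.
Qed.
Lemma pR_gt0 : (0 : Rl) < p%:R. Proof. by rewrite ltr0n; have := p_gt1; case: p. Qed.
Lemma pinv_le1 : (p%:R : Rl)^-1 <= 1.
Proof. rewrite invr_le1 ?pR_gt0 ?unitfE ?gt_eqF ?pR_gt0 // ler1n; have := p_gt1; case: p => //. Qed.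

Lemma Iideal_O i x : Iideal abs p i x -> in_O abs x.
Proof. by case: i => [|i] //= []. Qed.

Lemma Iideal_mono i x y : abs x <= abs y -> Iideal abs p i y -> Iideal abs p i x.
Proof.
elim: i x y => [|i IH] x y hxy /=.
  by rewrite /in_O => hy; apply: le_trans hxy hy.
case=> hy [Y [HY eY]]; split; first by apply: le_trans hxy hy.
exists (x ^+ p / p%:R); split; last by rewrite mulrC divfK // pK_neq0.
apply: IH HY; rewrite (absM Ha) (absV Ha) ?pK_neq0 // (absX Ha).
have : abs (y ^+ p) = abs (p%:R * Y) by rewrite eY.
rewrite (absX Ha) (absM Ha) => e.
have ap0 : 0 < abs (p%:R : K).
  by rewrite lt_def (abs_ge0 Ha) andbT; apply/eqP => /(abs_eq0 Ha) /eqP; rewrite (negbTE pK_neq0).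
by rewrite ler_pdivrMr // mulrC -e lerXn2r // nnegrE (abs_ge0 Ha).
Qed.

Lemma Iideal_sub i x y : Iideal abs p i x -> Iideal abs p i y -> Iideal abs p i (x - y).
Proof.
move=> hx hy; have h := absD Ha x (- y); rewrite (absN Ha) in h.
have [le|le] := leP (abs x) (abs y).
  by apply: Iideal_mono hy; apply: le_trans h _; rewrite ge_max le lexx.
by apply: Iideal_mono hx; apply: le_trans h _; rewrite ge_max (ltW le) lexx.
Qed.

Lemma Iideal_add i x y : Iideal abs p i x -> Iideal abs p i y -> Iideal abs p i (x + y).
Proof.
move=> hx hy; rewrite -[y]opprK; apply: Iideal_sub => //.
by apply: Iideal_mono hy; rewrite (absN Ha).
Qed.

Lemma Iideal_succ i x : Iideal abs p i.+1 x -> Iideal abs p i x.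
Proof.
elim: i x => [|i IH] x; first by case.
by case=> hx [Y [HY eY]]; split => //; exists Y; split => //; apply: IH.
Qed.

Lemma Iideal_small i x : abs x <= abs (p%:R : K) -> Iideal abs p i x.
Proof.
elim: i x => [|i IH] x hx.
  by rewrite /= /in_O; apply: le_trans hx _; rewrite Hpa pinv_le1.
have hO : in_O abs x by rewrite /in_O; apply: le_trans hx _; rewrite Hpa pinv_le1.
split => //; exists (x ^+ p / p%:R); split; last by rewrite mulrC divfK // pK_neq0.
apply: IH; rewrite (absM Ha) (absV Ha) ?pK_neq0 // (absX Ha) Hpa invrK.
have hx0 : 0 <= abs x := abs_ge0 Ha x.
have pinv0 : (0 : Rl) <= (p%:R)^-1 by rewrite invr_ge0 ler0n.
have h1 : abs x ^+ p <= (p%:R)^-1 ^+ 2.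
  have h2 : abs x ^+ p <= ((p%:R : Rl)^-1) ^+ p.
    by rewrite lerXn2r // ?nnegrE // -Hpa.
  apply: (le_trans h2).
  by rewrite ler_wiXn2l // ?pinv_le1 //; have := p_gt1.
rewrite -(ler_pM2l pR_gt0) in h1.
rewrite mulrC; apply: (le_trans h1); rewrite expr2 mulrA mulfV ?mul1r //.
by rewrite gt_eqF ?pR_gt0.
Qed.

End Ideals.
Section Gap.
Variables (Rl : realType) (K : fieldType) (abs : K -> Rl) (p : nat).
Hypothesis Ha : nonarch_abs abs.
Hypothesis Hp : prime p.
Hypothesis Hpa : abs p%:R = (p%:R)^-1.
Variable A : K -> Prop.
Hypothesis HA : is_subfield A.
Hypothesis HQA : forall x, Qp_part abs x -> A x.
Hypothesis HAc : alg_closed_sub A.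

Lemma Qp_ratr t : Qp_part abs (ratr t).
Proof.
exists (fun _ => t) => eps e0; exists 0%N => n _.
by rewrite subrr (abs0 Ha).
Qed.

Lemma A0 : A 0. Proof. by case: HA. Qed.
Lemma A1 : A 1. Proof. by case: HA. Qed.
Lemma AB x y : A x -> A y -> A (x - y). Proof. by case: HA => _ _ h _ _; apply: h. Qed.
Lemma AM x y : A x -> A y -> A (x * y). Proof. by case: HA => _ _ _ h _; apply: h. Qed.
Lemma AN x : A x -> A (- x). Proof. by move=> h; rewrite -sub0r; apply: AB => //; apply: A0. Qed.
Lemma AD x y : A x -> A y -> A (x + y).
Proof. by move=> hx hy; rewrite -[y]opprK; apply: AB => //; apply: AN. Qed.
Lemma Aratr t : A (ratr t). Proof. apply: HQA; exact: Qp_ratr. Qed.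
Lemma Ap : A p%:R. Proof. by rewrite -ratr_nat; apply: Aratr. Qed.

Lemma gap n : exists u, A u /\ Iideal abs p n u /\ ~ Iideal abs p n.+1 u.
Proof.
have pa0 : 0 < abs (p%:R : K) by rewrite Hpa invr_gt0 (pR_gt0 Rl Hp).
have plt1 : (p%:R : Rl)^-1 < 1.
  by rewrite invf_lt1 ?(pR_gt0 Rl Hp) // ltr1n (p_gt1 Hp).
elim: n => [|n [u [Au [Iu nIu]]]].
  exists 1; split; first exact: A1.
  split; first by rewrite /= /in_O (abs1 Ha).
  case=> _ [Y [HY eY]]; move: HY; rewrite /= /in_O => HY.
  have := congr1 abs eY; rewrite expr1n (abs1 Ha) (absM Ha) Hpa => e.
  have : (p%:R : Rl)^-1 * abs Y < 1.
    apply: le_lt_trans plt1; rewrite -[X in _ <= X]mulr1 ler_wpM2l //.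
    by rewrite invr_ge0 ler0n.
  by rewrite -e ltxx.
set q := 'X^p - (p%:R * u)%:P.
have sq : size q = p.+1 by rewrite size_XnsubC // prime_gt0.
have cq : forall i, A q`_i.
  move=> i; rewrite coefB coefXn coefC; apply: AB.
    by case: (i == p); [apply: A1 | apply: A0].
  by case: (i == 0%N); [apply: AM => //; apply: Ap | apply: A0].
have [w [Aw rw]] : exists w, A w /\ root q w.
  by apply: HAc cq _; rewrite sq ltnS prime_gt0.
have ew : w ^+ p = p%:R * u.
  by apply/eqP; rewrite -subr_eq0; move: rw; rewrite /root /q !hornerE.
exists w; split => //; split.
  split.
    have := congr1 abs ew; rewrite (absX Ha) (absM Ha) Hpa => e.
    rewrite /in_O -(expr_le1 (prime_gt0 Hp)) ?(abs_ge0 Ha) // e.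
    apply: le_trans (ltW plt1); rewrite -[X in _ <= X]mulr1 ler_wpM2l //.
      by rewrite invr_ge0 ler0n.
    exact: (Iideal_O Iu).
  by exists u.
case=> _ [Y [HY eY]]; apply: nIu.
have : p%:R * u = p%:R * Y :> K by rewrite -ew eY.
by move/(mulfI (pK_neq0 Ha Hp Hpa)) => ->.
Qed.

End Gap.
Section RootNear.
Variables (Rl : realType) (K : fieldType) (abs : K -> Rl) (p : nat).
Hypothesis Ha : nonarch_abs abs.
Variable A : K -> Prop.
Hypothesis HA : is_subfield A.
Hypothesis HAc : alg_closed_sub A.

Lemma coefA_div (r : {poly K}) c : A c -> (forall i, A (r * ('X - c%:P))`_i) ->
  forall i, A r`_i.
Proof.
move=> Ac HP.
have key : forall j, r`_j = (r * ('X - c%:P))`_j.+1 + r`_j.+1 * c.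
  by move=> j; rewrite mulrBr coefB coefMX coefMC /= subrK.
suff : forall k j, (size r <= j + k)%N -> A r`_j.
  by move=> h i; apply: (h (size r)); rewrite leq_addl.
elim=> [|k IH] j hj.
  by rewrite addn0 in hj; rewrite nth_default //; apply: (A0 HA).
rewrite key; apply: (AD HA) => //; apply: (AM HA) => //; apply: IH.
by rewrite addSn -addnS.
Qed.

Lemma root_near a : forall n (P : {poly K}), size P = n.+2 -> (forall i, A P`_i) ->
  exists b, A b /\ root P b /\
    abs (lead_coef P) * abs (a - b) ^+ n.+1 <= abs P.[a].
Proof.
have ge0 := abs_ge0 Ha.
elim=> [|n IH] P sP cP.
all: have [b1 [Ab1 rb1]] : exists b, A b /\ root P b by apply: HAc cP _; rewrite sP.
all: have [r eP] := factor_theorem _ _ rb1.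
all: have r0 : r != 0 by apply/eqP => r0; move: sP; rewrite eP r0 mul0r size_poly0.
all: have sr : size r = (size P).-1 by rewrite eP size_Mmonic ?monicXsubC // size_XsubC addn2.
all: have lP : lead_coef P = lead_coef r by rewrite eP lead_coef_Mmonic ?monicXsubC.
all: have hP : P.[a] = r.[a] * (a - b1) by rewrite eP hornerM hornerXsubC.
all: have cr : forall i, A r`_i by apply: (coefA_div Ab1); rewrite -eP.
  exists b1; split => //; split => //.
  rewrite sP /= in sr.
  have er : r = (r`_0)%:P by apply: size1_polyC; rewrite sr.
  by rewrite lP hP er lead_coefC hornerC expr1 (absM Ha).
rewrite sP /= in sr.
have [b2 [Ab2 [rb2 hb2]]] := IH r sr cr.
have d1 := ge0 (a - b1); have d2 := ge0 (a - b2).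
have [le|lt] := leP (abs (a - b1)) (abs (a - b2)).
  exists b1; split => //; split => //.
  rewrite hP (absM Ha) lP exprSr mulrA ler_wpM2r //.
  apply: le_trans hb2; rewrite ler_wpM2l //; exact: lerXn2r.
exists b2; split => //; split.
  by rewrite /root eP hornerM (eqP rb2) mul0r.
rewrite hP (absM Ha) lP exprSr mulrA.
apply: le_trans (_ : abs r.[a] * abs (a - b2) <= _).
  by rewrite ler_wpM2r.
by rewrite ler_wpM2l // ltW.
Qed.

End RootNear.
Lemma ratr0K (K : fieldType) : ratr 0 = 0 :> K.
Proof. by have := ratr_nat K 0; rewrite !mulr0n. Qed.

Lemma coef_Poly_ratr (K : fieldType) (s : seq rat) i :
  (Poly (map (@ratr K) s))`_i = ratr s`_i.
Proof.
rewrite coef_Poly; case: (ltnP i (size s)) => h; first by rewrite (nth_map 0).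
by rewrite !nth_default ?size_map // ratr0K.
Qed.

Lemma seq_choice (T : Type) (x0 : T) n (P : nat -> T -> Prop) :
  (forall i, (i < n)%N -> exists t, P i t) ->
  exists s, size s = n /\ forall i, (i < n)%N -> P i (nth x0 s i).
Proof.
elim: n => [|n IH] h; first by exists [::].
have [s [ss hs]] := IH (fun i hi => h i (ltnW hi)).
have [t ht] := h n (ltnSn n).
exists (rcons s t); split; first by rewrite size_rcons ss.
move=> i; rewrite ltnS leq_eqVlt => /orP[/eqP->|hi].
  by rewrite nth_rcons ss ltnn eqxx.
by rewrite nth_rcons ss hi; apply: hs.
Qed.

Lemma small_delta (Rl : realType) (X Y Z : Rl) : 0 < X -> 0 < Y -> 0 < Z ->
  exists d, [/\ 0 < d, d < X & d * Z < Y].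
Proof.
move=> hX hY hZ; set w := Num.min X (Y / Z).
have w0 : 0 < w by rewrite lt_min hX divr_gt0.
exists (w / 2); split.
- by rewrite divr_gt0.
- apply: lt_le_trans (_ : w <= X); last by rewrite ge_min lexx.
  by rewrite ltr_pdivrMr // ltr_pMr // ltr1n.
- apply: lt_le_trans (_ : w * Z <= Y).
    by rewrite ltr_pM2r // ltr_pdivrMr // ltr_pMr // ltr1n.
  by rewrite -ler_pdivlMr // ge_min lexx orbT.
Qed.

Section Dense.
Variables (Rl : realType) (K : fieldType) (abs : K -> Rl).
Hypothesis Ha : nonarch_abs abs.
Variable A : K -> Prop.
Hypothesis HA : is_subfield A.
Hypothesis HQA : forall x, Qp_part abs x -> A x.
Hypothesis HAc : alg_closed_sub A.
Hypothesis Halg : algebraic_over (Qp_part abs) A.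
Hypothesis Hd : abs_dense abs A.

Lemma dense_ratroot x eps : 0 < eps -> exists (s : seq rat) b,
  Poly (map (@ratr K) s) != 0 /\ root (Poly (map (@ratr K) s)) b /\ abs (x - b) < eps.
Proof.
move=> e0.
have ge0 := abs_ge0 Ha.
have [a [Aa hxa]] := Hd x e0.
have [q [q0 [cq rq]]] := Halg Aa.
have sq : (1 < size q)%N.
  rewrite ltnNge; apply/negP => h; move: q0 rq; rewrite (size1_polyC h).
  by rewrite /root hornerC => /negP h1 h2; apply: h1; rewrite (eqP h2).
move: sq; case e: (size q) => [|[|m]] // _.
set cc := abs (lead_coef q).
have cc0 : 0 < cc.
  rewrite lt_def ge0 andbT; apply/eqP => /(abs_eq0 Ha) /eqP.
  by rewrite lead_coef_eq0 (negbTE q0).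
have lq : lead_coef q = q`_m.+1 by rewrite lead_coefE e.
set M := Num.max 1 (abs a).
have M1 : 1 <= M by rewrite le_max lexx.
have M0 : 0 < M ^+ m.+1 by rewrite exprn_gt0 // (lt_le_trans ltr01 M1).
have [d [d0 dc dM]] := small_delta cc0 (mulr_gt0 cc0 (exprn_gt0 m.+1 e0)) M0.
have [s [ss hs]] : exists s : seq rat, size s = m.+2 /\
    forall i, (i < m.+2)%N -> abs (q`_i - ratr (nth 0 s i)) < d.
  apply: (seq_choice 0 (P := fun i t => abs (q`_i - ratr t) < d)) => i _.
  have [f hf] := cq i.
  have [N hN] := hf d d0.
  by exists (f N); rewrite (absB Ha); apply: hN.
set Q := Poly (map (@ratr K) s).
have cQ : forall i, Q`_i = ratr (nth 0 s i) by move=> i; rewrite coef_Poly_ratr.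
have lQa : abs Q`_m.+1 = cc.
  rewrite /cc lq cQ; apply: (abs_close Ha).
  rewrite (absB Ha); apply: (lt_trans (hs _ _)) => //; by rewrite -lq.
have sQle : (size Q <= m.+2)%N by rewrite -ss -(size_map (@ratr K)) size_Poly.
have sQ : size Q = m.+2.
  apply/eqP; rewrite eqn_leq sQle /=; rewrite ltnNge; apply/negP => h.
  move: lQa; rewrite nth_default // (abs0 Ha) => h1; move: cc0; by rewrite -h1 ltxx.
have lQ : lead_coef Q = Q`_m.+1 by rewrite lead_coefE sQ.
have bound : abs Q.[a] <= d * M ^+ m.+1.
  have -> : Q.[a] = Q.[a] - q.[a] by rewrite (rootP rq) subr0.
  rewrite (horner_coef_wide _ sQle) (horner_coef_wide (n := m.+2) _) ?e //.
  rewrite -sumrB; apply: abs_sum_le => //.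
    by rewrite mulr_ge0 // ltW.
  move=> i; rewrite -mulrBl (absM Ha) (absX Ha); apply: ler_pM => //.
  - by apply: exprn_ge0.
  - by rewrite cQ (absB Ha) ltW // hs.
  - apply: le_trans (_ : M ^+ i <= _).
      rewrite lerXn2r // ?nnegrE //; [exact: (le_trans ler01 M1) | by rewrite le_max lexx orbT].
    by apply: ler_weXn2l => //; rewrite -ltnS.
have AQ : forall i, A Q`_i by move=> i; rewrite cQ; apply: (Aratr Ha HQA).
have [b [_ [rb hb]]] := root_near Ha HA HAc a sQ AQ.
exists s, b; split; first by rewrite -size_poly_eq0 sQ.
split => //.
have hab : abs (a - b) < eps.
  rewrite -(ltr_pXn2r (ltn0Sn m)) ?nnegrE ?(ltW e0) //.
  rewrite -(ltr_pM2l cc0); apply: le_lt_trans (le_trans _ bound) dM.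
  by rewrite -lQa -lQ.
have -> : x - b = (x - a) + (a - b) by rewrite addrA subrK.
exact: absD_lt.
Qed.

End Dense.
Lemma roots_list (K : fieldType) (P : {poly K}) : P != 0 ->
  exists l : seq K, forall x, root P x -> x \in l.
Proof.
move=> P0.
suff h : forall k (l : seq K), uniq l -> all (root P) l -> (size P <= size l + k)%N ->
  exists l' : seq K, forall x, root P x -> x \in l'.
  by apply: (h (size P) [::]).
elim=> [|k IH] l ul al hs.
  have := max_poly_roots P0 al ul; rewrite addn0 in hs.
  by rewrite ltnNge hs.
case: (classic (forall x, root P x -> x \in l)) => [h|h]; first by exists l.
have [x hx] := not_all_ex_not _ _ h.
have [rx nx] := imply_to_and _ _ hx.
apply: (IH (x :: l)) => /=.
- by rewrite ul andbT; apply/negP.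
- by rewrite rx.
- by rewrite addSnnS.
Qed.

Theorem lemma5p5 (p : nat) (Rl : realType) (K : fieldType) (abs : K -> Rl) :
  prime p -> is_Cp abs p -> ~ nested_coset_condition abs p.
Proof.
move=> Hp [Ha Hpa Hc [A [HA HQA HAc Halg Hd]]] Hnest.
have HL : forall s : seq rat, exists l : seq K,
    Poly (map (@ratr K) s) != 0 -> forall x, root (Poly (map (@ratr K) s)) x -> x \in l.
  move=> s; case: (eqVneq (Poly (map (@ratr K) s)) 0) => [->|h].
    by exists [::].
  by have [l hl] := roots_list h; exists l.
pose L s := proj1_sig (constructive_indefinite_description _ (HL s)).
have HL' : forall s, Poly (map (@ratr K) s) != 0 ->
    forall x, root (Poly (map (@ratr K) s)) x -> x \in L s.
  by move=> s; exact: (proj2_sig (constructive_indefinite_description _ (HL s))).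
pose a (n : nat) : K := match (unpickle n : option (seq rat * nat)) with
  | Some (s, k) => nth 0 (L s) k | None => 0 end.
have Hstep : forall n c, exists c', Iideal abs p n (c' - c) /\ ~ Iideal abs p n.+1 (a n - c').
  move=> n c.
  case: (classic (Iideal abs p n.+1 (a n - c))) => h.
    have [u [_ [Iu nIu]]] := gap Ha Hp Hpa HA HQA HAc n.
    exists (c + u); split; first by rewrite addrC addKr.
    move=> h2; apply: nIu.
    have -> : u = (a n - c) - (a n - (c + u)) by ring.
    exact: Iideal_sub.
  exists c; split => //; rewrite subrr; apply: (Iideal_small Ha Hp Hpa).
  by rewrite (abs0 Ha) (abs_ge0 Ha).
pose step n c := proj1_sig (constructive_indefinite_description _ (Hstep n c)).
pose cs := fix f n := match n with 0%N => 0 | n'.+1 => step n' (f n') end.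
have Hcs : forall n, Iideal abs p n (cs n.+1 - cs n) /\ ~ Iideal abs p n.+1 (a n - cs n.+1).
  move=> n; exact: (proj2_sig (constructive_indefinite_description _ (Hstep n (cs n)))).
have csO : forall n, in_O abs (cs n).
  elim=> [|n IH]; first by rewrite /in_O /= (abs0 Ha) ler01.
  have -> : cs n.+1 = (cs n.+1 - cs n) + cs n by rewrite subrK.
  apply: (Iideal_add (i := 0%N) Ha Hp Hpa) => //.
  exact: (Iideal_O (Hcs n).1).
have Hn : forall (i : nat) (y : K), in_O abs y ->
    Iideal abs p i.+1 (y - cs i.+1) -> Iideal abs p i (y - cs i).
  move=> i y _ hy.
  have -> : y - cs i = (y - cs i.+1) + (cs i.+1 - cs i) by rewrite addrA subrK.
  apply: (Iideal_add Ha Hp Hpa); last exact: (Hcs i).1.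
  exact: (Iideal_succ hy).
have [x [xO hx]] := Hnest cs csO Hn.
have pa0 : 0 < abs (p%:R : K) by rewrite Hpa invr_gt0 (pR_gt0 Rl Hp).
have [s [b [Q0 [rb hxb]]]] := dense_ratroot Ha HA HQA HAc Halg Hd x pa0.
have bL := HL' s Q0 b rb.
set m := pickle (s, index b (L s)).
have am : a m = b by rewrite /a /m pickleK /= nth_index.
apply: (Hcs m).2.
have -> : a m - cs m.+1 = (b - x) + (x - cs m.+1) by rewrite am addrA subrK.
apply: (Iideal_add Ha Hp Hpa); last exact: hx.
by apply: (Iideal_small Ha Hp Hpa); rewrite (absB Ha) ltW.
Qed.
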